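(* Let $(V,E)$ be a finite graph and $p\in[0,1]$. Define rates on $\{0,1\}^E\times\{-1,1\}^V$ as follows: if there exists $x\in V$ such that $\sigma'=\sigma^x$ and $\eta'(e)=\eta(e)$ for all $e\in E\setminus E_x$, then $$c((\eta,\sigma),(\eta',\sigma'))=(1-p)^{|\{e\in E_x:\eta'(e)=0\}|}\,p^{|\{e\in E_x:\eta'(e)=1\}|}\,\mathbf 1_{(\eta',\sigma')\in\mathcal C_x};$$ otherwise, for $(\eta,\sigma)\neq(\eta',\sigma')$, the rate is $0$; and $c((\eta,\sigma),(\eta,\sigma))=-\sum_{(\eta',\sigma')\ne(\eta,\sigma)}c((\eta,\sigma),(\eta',\sigma'))$. Then these rates satisfy the detailed balance equation $IP(\eta,\sigma)c((\eta,\sigma),(\eta',\sigma'))=IP(\eta',\sigma')c((\eta',\sigma'),(\eta,\sigma))$ for all pairs of states.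
   Context: Edge configurations $\eta\in\{0,1\}^E$, spin configurations $\sigma\in\{-1,1\}^V$. For $e=\langle x,y\rangle$, $\delta_\sigma(e)=\mathbf 1_{\sigma(x)=\sigma(y)}$. $IP(\eta,\sigma)=\frac1Z\prod_{e\in E}\big(p\mathbf 1_{\eta(e)=1}\delta_\sigma(e)+(1-p)\mathbf 1_{\eta(e)=0}\big)$ with $Z$ the normalizing constant. $E_x$ is the set of edges with endvertex $x$; $\sigma^x$ is $\sigma$ with the spin at $x$ flipped. $\mathcal C_x=\{(\eta,\sigma):\eta(e)\le\delta_\sigma(e)\text{ for all }e\in E_x\}$. *)

(* Defs.v *)
From HB Require Import structures.
From mathcomp Require Import all_boot all_order all_algebra.
Set Implicit Arguments. Unset Strict Implicit. Unset Printing Implicit Defensive.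
Import Order.TTheory GRing.Theory Num.Theory.
Local Open Scope ring_scope.

(* Edge configurations: eta : {ffun E -> bool} (true = 1, false = 0).
   Spin configurations: sigma : {ffun V -> bool} (true = +1, false = -1). *)

Section Model.
Variables (V E : finType) (ep1 ep2 : E -> V).

Definition econf := {ffun E -> bool}.
Definition sconf := {ffun V -> bool}.
Definition state := (econf * sconf)%type.

Definition delta (sigma : sconf) (e : E) : bool := sigma (ep1 e) == sigma (ep2 e).

Definition Ex (x : V) : {set E} := [set e | (ep1 e == x) || (ep2 e == x)].

Definition flip (sigma : sconf) (x : V) : sconf :=
  [ffun y => if y == x then ~~ sigma y else sigma y].

Definition inC (x : V) (s : state) : bool :=
  [forall e in Ex x, s.1 e ==> delta s.2 e].

Variables (R : realFieldType) (p : R).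

Definition weight (s : state) : R :=
  \prod_(e : E) (p * (s.1 e)%:R * (delta s.2 e)%:R + (1 - p) * (~~ s.1 e)%:R).

Definition Zc : R := \sum_(s : state) weight s.

Definition IP (s : state) : R := weight s / Zc.

Definition move_at (s s' : state) (x : V) : bool :=
  (s'.2 == flip s.2 x) && [forall e, (e \notin Ex x) ==> (s'.1 e == s.1 e)].

Definition rate_off (s s' : state) : R :=
  match [pick x | move_at s s' x] with
  | Some x =>
      (1 - p) ^+ #|[set e in Ex x | ~~ s'.1 e]| * p ^+ #|[set e in Ex x | s'.1 e]|
      * (inC x s')%:R
  | None => 0
  end.

Definition rate (s s' : state) : R :=
  if s == s' then - \sum_(s'' : state | s'' != s) rate_off s s'' else rate_off s s'.

End Model.

(* Main.v *)
Require Import Defs.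
From mathcomp Require Import all_boot all_order all_algebra.
From mathcomp Require Import ring.
Import Order.TTheory GRing.Theory Num.Theory.
Local Open Scope ring_scope.

Section Proof.
Variables (V E : finType) (ep1 ep2 : E -> V) (R : realFieldType) (p : R).

Lemma flipK (sg : sconf V) x : flip (flip sg x) x = sg.
Proof. apply/ffunP => y; rewrite !ffunE; case: eqP => [->|]; rewrite ?negbK //. Qed.

Lemma flip_inj (sg : sconf V) x y : flip sg x = flip sg y -> x = y.
Proof.
move/(congr1 (fun f : sconf V => f x)); rewrite !ffunE eqxx.
case: eqP => // _; by case: (sg x).
Qed.

Lemma move_sym s s' x : move_at ep1 ep2 s s' x -> move_at ep1 ep2 s' s x.
Proof.
case/andP => /eqP H /forallP H2; apply/andP; split.
  by rewrite H flipK.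
apply/forallP => e; apply/implyP => he; move: (H2 e); rewrite he /= eq_sym //.
Qed.

Lemma move_uniq s s' x y : move_at ep1 ep2 s s' x -> move_at ep1 ep2 s s' y -> x = y.
Proof.
case/andP => /eqP H _; case/andP => /eqP H' _; apply: (@flip_inj s.2).
by rewrite -H -H'.
Qed.

Lemma delta_flip (sg : sconf V) x e : e \notin Ex ep1 ep2 x ->
  delta ep1 ep2 (flip sg x) e = delta ep1 ep2 sg e.
Proof.
rewrite /Ex inE negb_or => /andP [h1 h2].
by rewrite /delta !ffunE (negbTE h1) (negbTE h2).
Qed.

Definition w (t : state V E) e : R :=
  p * (t.1 e)%:R * (delta ep1 ep2 t.2 e)%:R + (1 - p) * (~~ t.1 e)%:R.

Definition f x (t : state V E) : R :=
  (1 - p) ^+ #|[set e in Ex ep1 ep2 x | ~~ t.1 e]| * p ^+ #|[set e in Ex ep1 ep2 x | t.1 e]|.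

Lemma weight_split x t : weight ep1 ep2 p t =
  (\prod_(e in Ex ep1 ep2 x) w t e) * \prod_(e | e \notin Ex ep1 ep2 x) w t e.
Proof. by rewrite /weight (bigID (fun e => e \in Ex ep1 ep2 x)). Qed.

Lemma f_prod x t : f x t = \prod_(e in Ex ep1 ep2 x) (if t.1 e then p else 1 - p).
Proof.
rewrite (bigID (fun e => t.1 e)) /= mulrC /f.
congr (_ * _).
  rewrite -prodr_const; apply: eq_big => [e|e]; first by rewrite inE.
  by rewrite inE => /andP [_ /negbTE ->].
rewrite -prodr_const; apply: eq_big => [e|e]; first by rewrite inE.
by rewrite inE => /andP [_ ->].
Qed.

Lemma A_inC x t : inC ep1 ep2 x t ->
  \prod_(e in Ex ep1 ep2 x) w t e = f x t.
Proof.
move/forallP => H; rewrite f_prod; apply: eq_bigr => e he.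
move: (H e); rewrite he /= /w; case: (t.1 e) => /= [->|_]; rewrite /=; ring.
Qed.

Lemma A_ninC x t : ~~ inC ep1 ep2 x t ->
  \prod_(e in Ex ep1 ep2 x) w t e = 0.
Proof.
move/forallPn => [e]; rewrite negb_imply => /andP [he].
rewrite negb_imply => /andP [h1 /negbTE h2].
rewrite (bigD1 e) //= /w h1 h2 /=; ring.
Qed.

Lemma main s s' x : move_at ep1 ep2 s s' x ->
  weight ep1 ep2 p s * (f x s' * (inC ep1 ep2 x s')%:R) =
  weight ep1 ep2 p s' * (f x s * (inC ep1 ep2 x s)%:R).
Proof.
move=> hm; rewrite !(weight_split x).
have -> : \prod_(e | e \notin Ex ep1 ep2 x) w s' e = \prod_(e | e \notin Ex ep1 ep2 x) w s e.
  apply: eq_bigr => e he; case/andP: hm => /eqP h2 /forallP h1.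
  move: (h1 e); rewrite he /= => /eqP h3.
  by rewrite /w h3 h2 delta_flip.
case: (boolP (inC ep1 ep2 x s)) => c; case: (boolP (inC ep1 ep2 x s')) => c'.
- rewrite !A_inC //=; ring.
- rewrite (@A_ninC x s' c') /=; ring.
- rewrite (@A_ninC x s c) /=; ring.
- rewrite /=; ring.
Qed.

End Proof.
Arguments move_uniq {V E ep1 ep2 s s' x y}.
Arguments move_sym {V E ep1 ep2 s s' x}.
Arguments main {V E ep1 ep2 R p s s' x}.

Theorem proposition4 (V E : finType) (ep1 ep2 : E -> V) (R : realFieldType) (p : R)
  (hp0 : 0 <= p) (hp1 : p <= 1) :
  forall s s' : state V E,
    IP ep1 ep2 p s * rate ep1 ep2 p s s' = IP ep1 ep2 p s' * rate ep1 ep2 p s' s.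
Proof.
move=> s s'; rewrite /rate eq_sym; case: eqP => [->//|_].
rewrite /IP /rate_off.
case: pickP => [x hx|hn].
  case: pickP => [y hy|hn]; last by move: (hn x); rewrite move_sym.
  have exy : y = x by apply: (move_uniq (move_sym hy) hx).
  subst y.
  have := main hx; rewrite /f => H.
  rewrite mulrAC [X in _ = X]mulrAC H //.
case: pickP => [y hy|_]; last by rewrite !mulr0.
by move: (hn y); rewrite move_sym.
Qed.
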